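(* Let $\mathcal{G}$ be an undirected graph on $n$ nodes with symmetric nonnegative adjacency matrix $A=(a_{ij})\in\mathbb{R}^{n\times n}$ and degree matrix $D=\mathrm{diag}(d_1,\dots,d_n)$. Let $L_s=I-D^{-1/2}AD^{-1/2}$ be the symmetrically normalized graph Laplacian, with eigendecomposition $L_s=U\Lambda U^{-1}$, where $\Lambda=\mathrm{diag}(\lambda_1,\dots,\lambda_n)$ and $U=[\bm u_1,\dots,\bm u_n]$ is orthogonal. Let $p$ be a real function and $G=U\,\mathrm{diag}(p(\lambda_1),\dots,p(\lambda_n))\,U^{-1}$. If $p$ is nonincreasing and nonnegative on the set of eigenvalues $\{\lambda_1,\dots,\lambda_n\}$, then for any signal $\bm f\in\mathbb{R}^n$ with filtered signal $\bar{\bm f}=G\bm f$ (both nonzero), we have $$\Omega\!\left(\frac{\bar{\bm f}}{\|\bar{\bm f}\|_2}\right)\le \Omega\!\left(\frac{\bm f}{\|\bm f\|_2}\right),$$ where for $\bm g\in\mathbb{R}^n$, $\Omega(\bm g)=\frac12\sum_{(v_i,v_j)\in\mathcal{E}} a_{ij}\left\|\frac{\bm g(i)}{\sqrt{d_i}}-\frac{\bm g(j)}{\sqrt{d_j}}\right\|_2^2=\bm g^\top L_s\bm g$.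
   Context: A graph signal is a vector $\bm f\in\mathbb{R}^n$ assigning a real value to each node. A graph filter with frequency response function $p$ is the matrix $G=Up(\Lambda)U^{-1}$. $\Omega$ is the smoothness measure (Laplacian–Beltrami operator) given in the claim; $\mathcal{E}$ is the edge set. The eigenvalues of $L_s$ lie in $[0,2]$. *)

(* Defs.v *)
From HB Require Import structures.
From mathcomp Require Import all_boot all_order all_algebra.
Set Implicit Arguments. Unset Strict Implicit. Unset Printing Implicit Defensive.
Import Order.TTheory GRing.Theory Num.Theory.
Local Open Scope ring_scope.

Definition degree (R : rcfType) (n : nat) (A : 'M[R]_n) (i : 'I_n) : R :=
  \sum_(j < n) A i j.

Definition Dmhalf (R : rcfType) (n : nat) (A : 'M[R]_n) : 'M[R]_n :=
  diag_mx (\row_i (Num.sqrt (degree A i))^-1).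

Definition Lsym (R : rcfType) (n : nat) (A : 'M[R]_n) : 'M[R]_n :=
  1%:M - Dmhalf A *m A *m Dmhalf A.

Definition norm2 (R : rcfType) (n : nat) (f : 'cV[R]_n) : R :=
  Num.sqrt (\sum_(i < n) f i 0 ^+ 2).

(* edge set: (v_i, v_j) is an edge iff a_ij <> 0 (ordered pairs, each
   undirected edge appearing in both orientations, hence the factor 1/2) *)
Definition is_edge (R : rcfType) (n : nat) (A : 'M[R]_n) (i j : 'I_n) : bool :=
  A i j != 0.

Definition Omega (R : rcfType) (n : nat) (A : 'M[R]_n) (g : 'cV[R]_n) : R :=
  2^-1 * \sum_(i < n) \sum_(j < n | is_edge A i j)
     A i j * (g i 0 / Num.sqrt (degree A i) - g j 0 / Num.sqrt (degree A j)) ^+ 2.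

(* Main.v *)
Require Import Defs.
From HB Require Import structures.
From mathcomp Require Import all_boot all_order all_algebra.
From mathcomp Require Import ring lra.
Import Order.TTheory GRing.Theory Num.Theory.
Set Implicit Arguments. Unset Strict Implicit.
Local Open Scope ring_scope.

Definition qf (R : rcfType) n (M : 'M[R]_n) (g : 'cV[R]_n) : R := (g^T *m M *m g) 0 0.

Lemma qfE (R : rcfType) n (M : 'M[R]_n) g :
  qf M g = \sum_i \sum_j g i 0 * M i j * g j 0.
Proof.
rewrite /qf mxE exchange_big; apply: eq_bigr => i _ /=.
rewrite mxE big_distrl /=.
by apply: eq_bigr => j _; rewrite !mxE.
Qed.

Lemma Omega_qf (R : rcfType) n (A : 'M[R]_n) g :
  A^T = A -> (forall i, 0 < degree A i) -> Omega A g = qf (Lsym A) g.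
Proof.
move=> AT dpos.
set s := fun i => Num.sqrt (degree A i).
have s2 : forall i, s i ^+ 2 = degree A i by move=> i; rewrite sqr_sqrtr // ltW.
have sn0 : forall i, s i != 0 by move=> i; rewrite sqrtr_eq0 -ltNge.
set h := fun i => g i 0 / s i.
have Aij : forall i j, A j i = A i j by move=> i j; rewrite -{1}AT mxE.
have LE : forall i j, Lsym A i j = (i == j)%:R - (s i)^-1 * A i j * (s j)^-1.
  move=> i j; rewrite /Lsym /Dmhalf mul_mx_diag mul_diag_mx !mxE.
  by [].
have gsq : forall i, g i 0 ^+ 2 = \sum_j A i j * h i ^+ 2.
  move=> i; rewrite -mulr_suml -/(degree A i) -s2 /h; field; exact: sn0.
have Q : qf (Lsym A) g = \sum_i \sum_j A i j * h i ^+ 2 - \sum_i \sum_j A i j * (h i * h j).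
  rewrite qfE -(eq_bigr _ (fun i _ => gsq i)) -sumrB; apply: eq_bigr => i _.
  rewrite (bigD1 i) //= [in RHS](bigD1 i) //= opprD addrA; congr (_ + _).
    by rewrite LE eqxx /= /h; field; exact: sn0.
  rewrite -sumrN; apply: eq_bigr => j /negbTE ij.
  by rewrite LE eq_sym ij /= /h; field; rewrite ?sn0.
have O : Omega A g = 2^-1 * \sum_i \sum_j A i j * (h i - h j) ^+ 2.
  rewrite /Omega; congr (_ * _); apply: eq_bigr => i _.
  rewrite big_mkcond /=; apply: eq_bigr => j _; rewrite /is_edge.
  by case: eqP => [->|]; rewrite ?mul0r.
have X : \sum_i \sum_j A i j * h j ^+ 2 = \sum_i \sum_j A i j * h i ^+ 2.
  by rewrite exchange_big; apply: eq_bigr => i _; apply: eq_bigr => j _; rewrite Aij.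
rewrite O Q.
have -> : \sum_i \sum_j A i j * (h i - h j) ^+ 2 =
  (\sum_i \sum_j A i j * h i ^+ 2 + \sum_i \sum_j A i j * h j ^+ 2)
   - 2 * \sum_i \sum_j A i j * (h i * h j).
  rewrite -big_split /= mulr_sumr -sumrB; apply: eq_bigr => i _.
  rewrite -big_split /= mulr_sumr -sumrB; apply: eq_bigr => j _.
  ring.
by rewrite X; field.
Qed.

Definition sq (R : rcfType) n (g : 'cV[R]_n) : R := \sum_i g i 0 ^+ 2.

Lemma sqE (R : rcfType) n (g : 'cV[R]_n) : sq g = (g^T *m g) 0 0.
Proof. by rewrite /sq mxE; apply: eq_bigr => i _; rewrite mxE. Qed.

Lemma sq_gt0 (R : rcfType) n (g : 'cV[R]_n) : g != 0 -> 0 < sq g.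
Proof.
move=> gn0; have s0 : 0 <= sq g by apply: sumr_ge0 => i _; exact: sqr_ge0.
rewrite lt_def s0 andbT /sq.
apply/eqP => /(psumr_eq0P (fun i _ => sqr_ge0 (g i 0))) H.
apply/negP: gn0; rewrite negbK; apply/eqP/matrixP => i j.
by rewrite ord1 mxE; apply/eqP; rewrite -sqrf_eq0; apply/eqP; apply: H.
Qed.

Lemma qf_scale (R : rcfType) n (M : 'M[R]_n) k g : qf M (k *: g) = k ^+ 2 * qf M g.
Proof.
rewrite !qfE mulr_sumr; apply: eq_bigr => i _; rewrite mulr_sumr; apply: eq_bigr => j _.
by rewrite !mxE; ring.
Qed.

Lemma Omega_norm (R : rcfType) n (A : 'M[R]_n) g :
  A^T = A -> (forall i, 0 < degree A i) -> g != 0 ->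
  Omega A ((norm2 g)^-1 *: g) = qf (Lsym A) g / sq g.
Proof.
move=> AT dp gn0; rewrite Omega_qf // qf_scale exprVn /norm2 sqr_sqrtr.
  by rewrite mulrC.
by rewrite sumr_ge0 // => i _; rewrite sqr_ge0.
Qed.

Lemma qf_orth (R : rcfType) n (U : 'M[R]_n) (lam : 'rV[R]_n) v :
  U^T *m U = 1%:M -> qf (U *m diag_mx lam *m U^T) (U *m v) = \sum_i lam 0 i * v i 0 ^+ 2.
Proof.
move=> UU; rewrite /qf trmx_mul !mulmxA -(mulmxA v^T U^T U) UU mulmx1.
rewrite -(mulmxA (v^T *m diag_mx lam) U^T U) UU mulmx1 mul_mx_diag mxE.
by apply: eq_bigr => i _; rewrite !mxE; ring.
Qed.

Lemma sq_orth (R : rcfType) n (U : 'M[R]_n) v :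
  U^T *m U = 1%:M -> sq (U *m v) = sq v.
Proof.
by move=> UU; rewrite !sqE trmx_mul -mulmxA (mulmxA U^T) UU mul1mx.
Qed.

Lemma cheb (R : rcfType) n (l b w : 'I_n -> R) :
  (forall i, 0 <= w i) -> (forall i j, (l i - l j) * (b i - b j) <= 0) ->
  (\sum_i l i * b i * w i) * (\sum_i w i) <= (\sum_i l i * w i) * (\sum_i b i * w i).
Proof.
move=> w0 H; rewrite -subr_ge0 !mulr_suml.
set X := fun i j => w i * w j * l i * (b j - b i).
have E : \sum_i (l i * w i * \sum_j b j * w j) - \sum_i (l i * b i * w i * \sum_j w j)
   = \sum_i \sum_j X i j.
  rewrite -sumrB; apply: eq_bigr => i _; rewrite !mulr_sumr -sumrB; apply: eq_bigr => j _.
  by rewrite /X; ring.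
rewrite E.
have E2 : \sum_i \sum_j X i j = 2^-1 * \sum_i \sum_j (X i j + X j i).
  have -> : \sum_i \sum_j (X i j + X j i) = \sum_i \sum_j X i j + \sum_i \sum_j X j i.
    by rewrite -big_split; apply: eq_bigr => i _; rewrite big_split.
  rewrite [X in _ = _ * (_ + X)]exchange_big /=.
  by field.
rewrite E2 mulr_ge0 //; first by rewrite invr_ge0 ler0n.
apply: sumr_ge0 => i _; apply: sumr_ge0 => j _.
have -> : X i j + X j i = - ((l i - l j) * (b i - b j)) * (w i * w j) by rewrite /X; ring.
by rewrite mulr_ge0 // ?oppr_ge0 ?H // mulr_ge0.
Qed.

Theorem theorem1 (R : rcfType) (n : nat) (A : 'M[R]_n)
    (U : 'M[R]_n) (lam : 'rV[R]_n) (p : R -> R) (f : 'cV[R]_n) :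
  A^T = A ->
  (forall i j, 0 <= A i j) ->
  (forall i, 0 < degree A i) ->
  U^T *m U = 1%:M ->
  Lsym A = U *m diag_mx lam *m invmx U ->
  (forall i j, lam 0 i <= lam 0 j -> p (lam 0 j) <= p (lam 0 i)) ->
  (forall i, 0 <= p (lam 0 i)) ->
  let G := U *m diag_mx (map_mx p lam) *m invmx U in
  let fbar := G *m f in
  f != 0 -> fbar != 0 ->
  Omega A ((norm2 fbar)^-1 *: fbar) <= Omega A ((norm2 f)^-1 *: f).
Proof.
move=> AT A0 dpos UU HL Hp Hp0 G fb fn0 fbn0.
have UU' : U *m U^T = 1%:M := mulmx1C UU.
have [_ Uu] := mulmx1_unit UU.
have invU : invmx U = U^T by rewrite -[U^T](mulmxK Uu) UU mul1mx.
set c := U^T *m f.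
have fE : f = U *m c by rewrite /c mulmxA UU' mul1mx.
set w := diag_mx (map_mx p lam) *m c.
have fbE : fb = U *m w by rewrite /fb /G /w invU -!mulmxA.
have sc : 0 < sq c by rewrite -(sq_orth c UU) -fE sq_gt0.
have sw : 0 < sq w by rewrite -(sq_orth w UU) -fbE sq_gt0.
rewrite !Omega_norm // HL invU fbE fE (qf_orth lam w UU) (qf_orth lam c UU) (sq_orth w UU) (sq_orth c UU).
rewrite ler_pdivrMr // mulrAC ler_pdivlMr //.
have wE : forall i, w i 0 = p (lam 0 i) * c i 0 by move=> i; rewrite /w mul_diag_mx !mxE.
have -> : \sum_i lam 0 i * w i 0 ^+ 2 = \sum_i lam 0 i * p (lam 0 i) ^+ 2 * c i 0 ^+ 2.
  by apply: eq_bigr => i _; rewrite wE exprMn mulrA.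
have -> : sq w = \sum_i p (lam 0 i) ^+ 2 * c i 0 ^+ 2.
  by apply: eq_bigr => i _; rewrite wE exprMn.
rewrite /sq; apply: (@cheb _ _ (fun i => lam 0 i) (fun i => p (lam 0 i) ^+ 2) (fun i => c i 0 ^+ 2)).
  by move=> i; rewrite sqr_ge0.
move=> i j /=; case: (lerP (lam 0 i) (lam 0 j)) => h.
  apply: mulr_le0_ge0; first by rewrite subr_le0.
  by rewrite subr_ge0 ler_sqr ?nnegrE ?Hp0 // Hp.
apply: mulr_ge0_le0; first by rewrite subr_ge0 ltW.
by rewrite subr_le0 ler_sqr ?nnegrE ?Hp0 // Hp // ltW.
Qed.
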